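(* Let $\mathcal F\subseteq\{\mathcal X\to[0,1]\}$ be a hypothesis class. Then for all integers $T,k\ge1$, $$\underline{\mathcal R}_T^{kT}(\mathcal F)\le\inf_{\epsilon>0}\Big\{\sup_{Z\subseteq\mathcal X,\,|Z|=kT}\log\mathcal N(\mathcal F|_Z,\epsilon)+2\epsilon T\Big\}.$$
   Context: Setting: contexts $\mathcal X$, labels $\{0,1\}$, log loss. For $f\in\mathcal F$, $p_f(1\mid x)=f(x)$, $p_f(0\mid x)=1-f(x)$; learner actions $a$ are pmfs on $\{0,1\}$ with loss $\ell(a,(x,y))=-\log a(y)$, and $f$ incurs $-\log p_f(y\mid x)$. Regret: $\mathcal R(\mathcal F,x_{1:T},y_{1:T},a_{1:T})=\sum_{t}\ell(a_t,(x_t,y_t))-\inf_{f\in\mathcal F}\sum_t(-\log p_f(y_t\mid x_t))$. For finite $X\subseteq\mathcal X$, $\underline{\mathcal R}_T(\mathcal F,X)=\max_{x_1\in X}\inf_{a_1}\sup_{y_1}\cdots\max_{x_T\in X}\inf_{a_T}\sup_{y_T}\mathcal R(\mathcal F,x_{1:T},y_{1:T},a_{1:T})$ and $\underline{\mathcal R}_T^M(\mathcal F)=\max_{|X|=M}\underline{\mathcal R}_T(\mathcal F,X)$. For a class $\mathcal G$ of functions on a set $Z$, a set $\tilde{\mathcal G}$ is an $\epsilon$-covering if for every $g\in\mathcal G$ there is $\tilde g\in\tilde{\mathcal G}$ with $\sup_{x\in Z}|g(x)-\tilde g(x)|\le\epsilon$; $\mathcal N(\mathcal G,\epsilon)$ is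 the minimal size of such a covering. $\mathcal F|_Z$ is the restriction of $\mathcal F$ to $Z$. Logarithms are natural. *)

(* Defs.v *)
From HB Require Import structures.
From mathcomp Require Import all_boot all_order all_algebra.
From mathcomp Require Import all_classical all_reals all_analysis.
Set Implicit Arguments. Unset Strict Implicit. Unset Printing Implicit Defensive.
Import Order.TTheory GRing.Theory Num.Theory.
Local Open Scope classical_set_scope.
Local Open Scope ring_scope.
Local Open Scope ereal_scope.

Section LogLossDefs.
Variables (R : realType) (X : Type).

Definition nlog (p : R) : \bar R :=
  if p == 0%R then +oo else (- ln p)%:E.

Definition elog (x : \bar R) : \bar R :=
  match x with
  | r%:E => if r == 0%R then -oo else (ln r)%:E
  | +oo => +oo
  | -oo => -oo
  end.

Definition pf (f : X -> R) (x : X) (y : bool) : R :=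
  if y then f x else (1 - f x)%R.

(* learner action a : pmf on {0,1}, parametrised by q = a(1) in [0,1] *)
Definition pact (q : R) (y : bool) : R := if y then q else (1 - q)%R.

(* history entries: (x_t, y_t, q_t) *)
Definition learner_loss (h : seq (X * bool * R)) : \bar R :=
  \sum_(e <- h) nlog (pact e.2 e.1.2).

Definition comp_loss (f : X -> R) (h : seq (X * bool * R)) : \bar R :=
  \sum_(e <- h) nlog (pf f e.1.1 e.1.2).

(* Regret = learner loss - inf_f loss of f; the undefined case
   +oo - +oo is resolved as +oo (dual addition). *)
Definition regret (F : set (X -> R)) (h : seq (X * bool * R)) : \bar R :=
  dual_adde (learner_loss h) (- ereal_inf [set comp_loss f h | f in F]).

Fixpoint game (F : set (X -> R)) (Xs : set X) (n : nat)
    (h : seq (X * bool * R)) : \bar R :=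
  match n with
  | 0 => regret F h
  | n'.+1 =>
      ereal_sup [set
        ereal_inf [set
          ereal_sup [set game F Xs n' (rcons h (x, y, q)) | y in [set: bool]]
        | q in [set q : R | (0 <= q <= 1)%R]]
      | x in Xs]
  end.

Definition minimax_regret (F : set (X -> R)) (T : nat) (Xs : set X) : \bar R :=
  game F Xs T [::].

(* \underline{R}_T^M(F): max over context sets of size M,
   represented as ranges of injective maps 'I_M -> X *)
Definition minimax_regret_M (F : set (X -> R)) (T M : nat) : \bar R :=
  ereal_sup [set minimax_regret F T (range w)
            | w in [set w : 'I_M -> X | injective w]].

(* covering number N(F|_Z, eps) in sup-norm on Z (+oo if no finite cover) *)
Definition covnum (F : set (X -> R)) (Z : set X) (eps : R) : \bar R :=
  ereal_inf [set (n%:R)%:E | n in [set n : nat |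
    exists G : 'I_n -> X -> R,
      forall f, F f -> exists i : 'I_n, forall x, Z x -> (`|f x - G i x| <= eps)%R]].

End LogLossDefs.

(* Main.v *)
Require Import Defs.
From HB Require Import structures.
From mathcomp Require Import all_boot all_order all_algebra.
From mathcomp Require Import all_classical all_reals all_analysis.
From mathcomp Require Import lra.
Import Order.TTheory GRing.Theory Num.Theory.
Local Open Scope classical_set_scope.
Local Open Scope ring_scope.
Local Open Scope ereal_scope.
Set Implicit Arguments.

Definition clampR {R : realType} (r : R) : R :=
  if (r < 0)%R then 0%R else if (1 < r)%R then 1%R else r.

Lemma clamp01 {R : realType} (r : R) : (0 <= clampR r <= 1)%R.
Proof. rewrite /clampR; case: ifP => H1; first by rewrite lexx ler01.
case: ifP => H2; first by rewrite ler01 lexx.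
apply/andP; split; [move: H1; rewrite ltNge => /negbFE //| by rewrite leNgt H2].
Qed.

Lemma clamp_close {R : realType} (a g e : R) : (0 <= a <= 1)%R ->
  (`|a - g| <= e)%R -> (clampR g - e <= a <= clampR g + e)%R.
Proof.
rewrite ler_distl => /andP[a0 a1] /andP[h1 h2]; rewrite /clampR.
case: ifP => H1; first (apply/andP; split; lra).
case: ifP => H2; first (apply/andP; split; lra).
by apply/andP; split; lra.
Qed.

Definition expt {R : realType} {X : Type} n (G : 'I_n -> X -> R) (eps : R)
  (i : 'I_n) (x : X) : R := ((clampR (G i x) + eps) / (1 + 2 * eps))%R.

Lemma expt01 {R : realType} {X : Type} n (G : 'I_n -> X -> R) (eps : R) i x :
  (0 < eps)%R -> (0 < expt G eps i x < 1)%R.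
Proof.
move=> e0; rewrite /expt; have /andP[c0 c1] := clamp01 (G i x).
have d0 : (0 < 1 + 2 * eps)%R by lra.
apply/andP; split; first by apply: divr_gt0; lra.
by rewrite ltr_pdivrMr //; lra.
Qed.

Lemma pact_gt0 {R : realType} (q : R) y : (0 < q < 1)%R -> (0 < pact q y)%R.
Proof. by move=> /andP[q0 q1]; case: y => /=; lra. Qed.


Definition wt {R : realType} {X : Type} n (G : 'I_n -> X -> R) (eps : R)
  (h : seq (X * bool * R)) (i : 'I_n) : R :=
  (\prod_(e <- h) pact (expt G eps i e.1.1) e.1.2)%R.

Definition Wt {R : realType} {X : Type} n (G : 'I_n -> X -> R) (eps : R) h : R :=
  (\sum_i wt G eps h i)%R.

Definition mixq {R : realType} {X : Type} n (G : 'I_n -> X -> R) (eps : R) h x : R :=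
  ((\sum_i wt G eps h i * expt G eps i x) / Wt G eps h)%R.

Definition pot {R : realType} {X : Type} n (G : 'I_n -> X -> R) (eps : R) h : \bar R :=
  learner_loss h + (ln (Wt G eps h) + 2 * eps * (size h)%:R)%:E.

Lemma wt_gt0 {R : realType} {X : Type} n (G : 'I_n -> X -> R) (eps : R) h i :
  (0 < eps)%R -> (0 < wt G eps h i)%R.
Proof.
move=> e0; rewrite /wt; elim: h => [|a h IH]; first by rewrite big_nil ltr01.
by rewrite big_cons mulr_gt0 // pact_gt0 // expt01.
Qed.

Lemma wt_le_Wt {R : realType} {X : Type} n (G : 'I_n -> X -> R) (eps : R) h i :
  (0 < eps)%R -> (wt G eps h i <= Wt G eps h)%R.
Proof.
move=> e0; rewrite /Wt (bigD1 i) //=.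
have : (0 <= \sum_(j < n | j != i) wt G eps h j)%R.
  by apply: sumr_ge0 => j _; apply/ltW/wt_gt0.
lra.
Qed.

Lemma Wt_gt0 {R : realType} {X : Type} n (G : 'I_n -> X -> R) (eps : R) h :
  (0 < n)%N -> (0 < eps)%R -> (0 < Wt G eps h)%R.
Proof.
move=> n0 e0; have H1 := @wt_gt0 _ _ _ G eps h (Ordinal n0) e0.
have H2 := @wt_le_Wt _ _ _ G eps h (Ordinal n0) e0; lra.
Qed.

Lemma wt_rcons {R : realType} {X : Type} n (G : 'I_n -> X -> R) (eps : R) h e i :
  wt G eps (rcons h e) i = (wt G eps h i * pact (expt G eps i e.1.1) e.1.2)%R.
Proof. by rewrite /wt big_rcons. Qed.

Lemma pact_mix {R : realType} {X : Type} n (G : 'I_n -> X -> R) (eps : R) h x y q :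
  (0 < n)%N -> (0 < eps)%R ->
  pact (mixq G eps h x) y = (Wt G eps (rcons h (x, y, q)) / Wt G eps h)%R.
Proof.
move=> n0 e0; have W0 := @Wt_gt0 _ _ _ G eps h n0 e0.
rewrite /mixq /Wt; under [X in (_ = X / _)%R]eq_bigr => i _ do rewrite wt_rcons /=.
case: y => //=.
rewrite -[X in (X - _)%R](@divff _ (\sum_i wt G eps h i)%R); last by rewrite gt_eqF.
rewrite -mulrBl; congr (_ / _)%R.
rewrite -sumrB; apply: eq_bigr => i _; by rewrite mulrBr mulr1.
Qed.

Lemma mix01 {R : realType} {X : Type} n (G : 'I_n -> X -> R) (eps : R) h x :
  (0 < n)%N -> (0 < eps)%R -> (0 <= mixq G eps h x <= 1)%R.
Proof.
move=> n0 e0; have W0 := @Wt_gt0 _ _ _ G eps h n0 e0.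
have S0 : (0 <= \sum_i wt G eps h i * expt G eps i x)%R.
  apply: sumr_ge0 => i _; apply: mulr_ge0; first exact/ltW/wt_gt0.
  by have /andP[/ltW] := @expt01 _ _ _ G eps i x e0.
apply/andP; split; first by apply: divr_ge0 => //; exact: ltW.
rewrite ler_pdivrMr // mul1r /Wt; apply: ler_sum => i _.
rewrite -[X in (_ <= X)%R]mulr1; apply: ler_wpM2l; first exact/ltW/wt_gt0.
by have /andP[_ /ltW] := @expt01 _ _ _ G eps i x e0.
Qed.


Lemma learner_rcons {R : realType} {X : Type} (h : seq (X * bool * R)) e :
  learner_loss (rcons h e) = learner_loss h + nlog (pact e.2 e.1.2).
Proof. by rewrite /learner_loss big_rcons. Qed.

Lemma nlog_gt0 {R : realType} (p : R) : (0 < p)%R -> nlog p = (- ln p)%:E.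
Proof. by move=> p0; rewrite /nlog gt_eqF. Qed.

Lemma nlog_ninfty {R : realType} (p : R) : nlog p != -oo.
Proof. by rewrite /nlog; case: ifP. Qed.

Lemma learner_ninfty {R : realType} {X : Type} (h : seq (X * bool * R)) :
  learner_loss h != -oo.
Proof.
rewrite /learner_loss; elim: h => [|a h IH]; first by rewrite big_nil.
rewrite big_cons; move: IH (nlog_ninfty (pact a.2 a.1.2)).
by case: (\sum_(_ <- _) _) => [r| |] //; case: (nlog _).
Qed.

Lemma pot_step {R : realType} {X : Type} n (G : 'I_n -> X -> R) (eps : R) h x y :
  (0 < n)%N -> (0 < eps)%R ->
  pot G eps (rcons h (x, y, mixq G eps h x)) = pot G eps h + (2 * eps)%:E.
Proof.
move=> n0 e0; have W0 := @Wt_gt0 _ _ _ G eps h n0 e0.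
have W1 := @Wt_gt0 _ _ _ G eps (rcons h (x, y, mixq G eps h x)) n0 e0.
rewrite /pot learner_rcons /= (@pact_mix _ _ _ G eps h x y (mixq G eps h x) n0 e0).
rewrite nlog_gt0; last exact: divr_gt0.
rewrite -!addeA -!EFinD; congr (_ + _%:E).
set a := Wt G eps (rcons _ _); set b := Wt G eps h.
have -> : ln (a / b) = (ln a - ln b)%R.
  by rewrite lnM ?posrE ?invr_gt0 // lnV ?posrE.
rewrite size_rcons -addn1 natrD; lra.
Qed.

Definition allZ {R : realType} {X : Type} (Z : set X) (h : seq (X * bool * R)) :=
  forall e, List.In e h -> Z e.1.1.

Lemma nlog_step {R : realType} {X : Type} n (G : 'I_n -> X -> R) (eps : R) (f : X -> R) i x y :
  (0 < eps)%R -> (0 <= f x <= 1)%R -> (`|f x - G i x| <= eps)%R ->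
  (- ln (pact (expt G eps i x) y) - 2 * eps)%:E <= nlog (pf f x y).
Proof.
move=> e0 f01 cl; rewrite /nlog; case: ifP => [_|pf0]; first exact: leey.
have /andP[c1 c2] := @clamp_close _ (f x) (G i x) eps f01 cl.
have /andP[a0 a1] := f01.
have pfpos : (0 < pf f x y)%R.
  by rewrite lt_def pf0 /=; case: y {pf0} => /=; lra.
have pe0 : (0 < pact (expt G eps i x) y)%R by apply: pact_gt0; apply: expt01.
have d0 : (0 < 1 + 2 * eps)%R by lra.
have le1 : (pf f x y <= pact (expt G eps i x) y * (1 + 2 * eps))%R.
  rewrite /expt; case: y {pf0 pfpos pe0} => /=.
    by rewrite divfK ?gt_eqF //; lra.
  by rewrite mulrBl mul1r divfK ?gt_eqF //; lra.
have H : (ln (pf f x y) <= ln (pact (expt G eps i x) y * (1 + 2 * eps)))%R.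
  by rewrite ler_ln ?posrE // mulr_gt0.
move: H; rewrite lnM ?posrE // => H.
have H2 : (ln (1 + 2 * eps) <= 2 * eps)%R by apply: le_ln1Dx; lra.
rewrite lee_fin; lra.
Qed.

Lemma comp_lb {R : realType} {X : Type} n (G : 'I_n -> X -> R) (eps : R) (Z : set X)
  (f : X -> R) i h :
  (0 < eps)%R -> (forall x, (0 <= f x <= 1)%R) ->
  (forall x, Z x -> (`|f x - G i x| <= eps)%R) -> allZ Z h ->
  (- ln (wt G eps h i) - 2 * eps * (size h)%:R)%:E <= comp_loss f h.
Proof.
move=> e0 f01 cov; rewrite /comp_loss /wt; elim: h => [|a h IH] hZ.
  rewrite !big_nil ln1 /= (_ : 0 = 0%:E) // lee_fin mulr0n; lra.
rewrite !big_cons.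
have Za : Z a.1.1 by apply: hZ; left.
have IH' := IH (fun e He => hZ e (or_intror He)).
have S := @nlog_step _ _ _ G eps f i a.1.1 a.1.2 e0 (f01 _) (cov _ Za).
set Sm := (\sum_(j <- h) nlog (pf f j.1.1 j.1.2)).
set N := nlog (pf f a.1.1 a.1.2).
set P := (\prod_(j <- h) pact (expt G eps i j.1.1) j.1.2)%R.
set pa := pact (expt G eps i a.1.1) a.1.2.
have H := leeD S IH'; rewrite -EFinD in H.
suff K : ((- ln (pa * P) - 2 * eps * (size (a :: h))%:R)%:E <= (N + Sm)%E) by exact K.
refine (le_trans _ H); rewrite lee_fin.
have p0 : (0 < pact (expt G eps i a.1.1) a.1.2)%R by apply: pact_gt0; apply: expt01.
have w0 := @wt_gt0 _ _ _ G eps h i e0; rewrite /wt in w0.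
rewrite lnM ?posrE // /= -addn1 natrD; lra.
Qed.

Lemma regret_pot {R : realType} {X : Type} n (G : 'I_n -> X -> R) (eps : R) (Z : set X)
  (F : set (X -> R)) h :
  (0 < n)%N -> (0 < eps)%R -> (forall f, F f -> forall x, (0 <= f x <= 1)%R) ->
  (forall f, F f -> exists i, forall x, Z x -> (`|f x - G i x| <= eps)%R) ->
  allZ Z h -> regret F h <= pot G eps h.
Proof.
move=> n0 e0 HF cov hZ; rewrite /regret /pot.
set c := (ln (Wt G eps h) + 2 * eps * (size h)%:R)%R.
have lb : (- c)%:E <= ereal_inf [set comp_loss f h | f in F].
  apply: le_ereal_inf_tmp => _ [f Ff <-].
  have [i Hi] := cov f Ff.
  refine (le_trans _ (@comp_lb _ _ _ G eps Z f i h e0 (HF f Ff) Hi hZ)).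
  rewrite lee_fin /c.
  have w0 := @wt_gt0 _ _ _ G eps h i e0.
  have W0 := @Wt_gt0 _ _ _ G eps h n0 e0.
  have := @wt_le_Wt _ _ _ G eps h i e0.
  rewrite -ler_ln ?posrE //; lra.
move: lb (learner_ninfty h).
case: (ereal_inf _) => [s| |] //; case: (learner_loss h) => [r| |] //=.
all: rewrite /dual_adde /=.
- move=> H _; rewrite -EFinD lee_fin; rewrite lee_fin in H; lra.
- by move=> _ _; exact: leNye.
Qed.


Lemma allZ_rcons {R : realType} {X : Type} (Z : set X) (h : seq (X * bool * R)) e :
  allZ Z h -> Z e.1.1 -> allZ Z (rcons h e).
Proof.
move=> hZ Ze e'; rewrite -cats1 => /List.in_app_iff [H|[<-|[]]] //.
exact: hZ.
Qed.

Lemma game_pot {R : realType} {X : Type} n (G : 'I_n -> X -> R) (eps : R) (Z : set X)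
  (F : set (X -> R)) m :
  (0 < n)%N -> (0 < eps)%R -> (forall f, F f -> forall x, (0 <= f x <= 1)%R) ->
  (forall f, F f -> exists i, forall x, Z x -> (`|f x - G i x| <= eps)%R) ->
  forall h, allZ Z h -> game F Z m h <= pot G eps h + (2 * eps * m%:R)%:E.
Proof.
move=> n0 e0 HF cov; elim: m => [|m IH] h hZ /=.
  rewrite mulr0n mulr0; apply: (le_trans (@regret_pot _ _ _ G eps Z F h n0 e0 HF cov hZ)).
  by case: (pot _ _ _) => [r| |] //=; rewrite addr0.
apply: ge_ereal_sup => _ [x Zx <-].
have q01 := @mix01 _ _ _ G eps h x n0 e0.
apply: (@le_trans _ _ (ereal_sup [set game F Z m (rcons h (x, y0, mixq G eps h x)) | y0 in [set: bool]])).
  by apply: ereal_inf_lbound; exists (mixq G eps h x).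
apply: ge_ereal_sup => _ [y _ <-].
apply: (le_trans (IH (rcons h (x, y, mixq G eps h x)) (@allZ_rcons _ _ Z h (x, y, mixq G eps h x) hZ Zx))).
rewrite pot_step // -addeA -EFinD (_ : (2 * eps + 2 * eps * m%:R = 2 * eps * m.+1%:R)%R) //.
rewrite [X in _ = (_ * X)%R]mulrSr; lra.
Qed.

Lemma game_empty {R : realType} {X : Type} (Z : set X) (F : set (X -> R)) m :
  (forall f, ~ F f) ->
  forall h, learner_loss h != +oo -> game F Z m h <= -oo.
Proof.
move=> F0; elim: m => [|m IH] h hL /=.
  rewrite /regret.
  have -> : [set comp_loss f h | f in F] = set0.
    by apply/seteqP; split => // y [f Ff _]; case: (F0 f Ff).
  rewrite ereal_inf0 /=; move: hL; case: (learner_loss h) => //.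
apply: ge_ereal_sup => _ [x Zx <-].
apply: (@le_trans _ _ (ereal_sup [set game F Z m (rcons h (x, y0, (1/2)%R)) | y0 in [set: bool]])).
  apply: ereal_inf_lbound; exists (1 / 2)%R => //=; apply/andP; split; lra.
apply: ge_ereal_sup => _ [y _ <-].
apply: IH; rewrite learner_rcons /= nlog_gt0; last by case: y => /=; lra.
by move: hL; case: (learner_loss h).
Qed.

Unset Implicit Arguments.

Lemma core {R : realType} {X : Type} (F : set (X -> R))
  (HF : forall f, F f -> forall x, (0 <= f x <= 1)%R) (Z : set X) (eps : R) T :
  (0 < eps)%R ->
  game F Z T [::] <= elog (covnum F Z eps) + (2 * eps * T%:R)%:E.
Proof.
move=> e0.
set S := fun n : nat => exists G : 'I_n -> X -> R,
      forall f, F f -> exists i : 'I_n, forall x, Z x -> (`|f x - G i x| <= eps)%R.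
have cE : covnum F Z eps = ereal_inf [set (n%:R)%:E | n in S] by [].
case: (pselect (exists n, S n)) => [ex|nex]; last first.
  have -> : covnum F Z eps = +oo.
    rewrite cE (_ : [set _ | n in S] = set0) ?ereal_inf0 //.
    by apply/seteqP; split => // y [m Sm _]; case: nex; exists m.
  by rewrite /= leey.
have ex' : exists n, `[< S n >] by case: ex => n Sn; exists n; exact/asboolP.
case: (ex_minnP ex') => n /asboolP Sn minn.
have Hc : covnum F Z eps = (n%:R)%:E.
  apply/le_anti/andP; split.
    by apply: ereal_inf_lbound; exists n.
  apply: le_ereal_inf_tmp => _ [m Sm <-]; rewrite lee_fin ler_nat; apply: minn.
  exact/asboolP.
rewrite Hc; case: n Sn {minn Hc} => [|n] [G cov].
  have F0 : forall f, ~ F f by move=> f Ff; have [[i Hi] _] := cov f Ff.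
  rewrite /= eqxx /=.
  apply: game_empty => //; by rewrite /learner_loss big_nil.
rewrite /= pnatr_eq0 /=.
apply: (le_trans (@game_pot _ _ _ G eps Z F T isT e0 HF cov [::] _)) => //.
rewrite /pot /learner_loss big_nil /= mulr0n mulr0 addr0.
have -> : Wt G eps [::] = n.+1%:R.
  rewrite /Wt /wt; under eq_bigr => i _ do rewrite big_nil.
  by rewrite sumr_const card_ord.
by rewrite add0e.
Qed.


Theorem theorem3p2 (R : realType) (X : Type) (F : set (X -> R))
  (HF : forall f, F f -> forall x, (0 <= f x <= 1)%R)
  (T k : nat) (HT : (1 <= T)%N) (Hk : (1 <= k)%N) :
  minimax_regret_M F T (k * T) <=
  ereal_inf [set
    ereal_sup [set elog (covnum F (range z) eps)
              | z in [set z : 'I_(k * T) -> X | injective z]]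
    + (2 * eps * T%:R)%:E
  | eps in [set eps : R | (0 < eps)%R]].
Proof.
rewrite /minimax_regret_M; apply: ge_ereal_sup => _ [w wI <-].
apply: le_ereal_inf_tmp => _ [eps e0 <-].
apply: (le_trans (@core _ _ F HF (range w) eps T e0)).
apply: leeD => //; apply: ereal_sup_ubound; by exists w.
Qed.
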